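(* For every positive integer $m$, there is no $(2^{2m},m,p)$-QRA coding with $p>1/2$. That is, there do not exist $p>1/2$, $m$-qubit states $\rho_x$ for $x\in\{0,1\}^{2^{2m}}$, and POVMs $\{E^i_0,E^i_1\}$ on $\mathbb{C}^{2^m}$ for $i\in\{1,\dots,2^{2m}\}$ with $\mathrm{Tr}(E^i_{x_i}\rho_x)\ge p$ for all $x$ and all $i$.
   Context: An $(n,m,p)$-quantum random access (QRA) coding is a map assigning to each $n$-bit string $x\in\{0,1\}^n$ an $m$-qubit state $\rho_x$ (a positive semidefinite trace-one operator on $\mathbb{C}^{2^m}$) such that for every $i\in\{1,\dots,n\}$ there is a POVM $E^i=\{E^i_0,E^i_1\}$ (i.e. $E^i_0,E^i_1$ are positive semidefinite Hermitian operators on $\mathbb{C}^{2^m}$ with $E^i_0+E^i_1=I$) satisfying $\mathrm{Tr}(E^i_{x_i}\rho_x)\ge p$ for all $x\in\{0,1\}^n$, where $x_i$ is the $i$-th bit of $x$. *)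

(* Defs.v *)
From Stdlib Require Import Reals.
From HB Require Import structures.
From mathcomp Require Import all_boot all_order all_algebra.
From mathcomp Require Import complex Rstruct.
Set Implicit Arguments. Unset Strict Implicit. Unset Printing Implicit Defensive.
Import Order.TTheory GRing.Theory Num.Theory ComplexField.
Local Open Scope ring_scope.

Definition Cplx : numClosedFieldType := (Rdefinitions.R)[i].

Definition adjmx (n k : nat) (A : 'M[Cplx]_(n, k)) : 'M[Cplx]_(k, n) :=
  \matrix_(i, j) (A j i)^*.

Definition hermitian_mx (n : nat) (A : 'M[Cplx]_n) : Prop := adjmx A = A.

Definition psd_mx (n : nat) (A : 'M[Cplx]_n) : Prop :=
  hermitian_mx A /\ forall v : 'cV[Cplx]_n, 0 <= (adjmx v *m A *m v) 0 0.

Definition density_mx (n : nat) (rho : 'M[Cplx]_n) : Prop :=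
  psd_mx rho /\ \tr rho = 1.

Definition povm2 (n : nat) (E : bool -> 'M[Cplx]_n) : Prop :=
  psd_mx (E false) /\ psd_mx (E true) /\ E false + E true = 1%:M.

(* An (n, m, p)-QRA coding. Bit strings x in {0,1}^n are finite functions
   'I_n -> bool (false = 0, true = 1); indices i in {1..n} are 'I_n. *)
Definition QRA_coding (n m : nat) (p : Rdefinitions.R) : Prop :=
  exists (rho : {ffun 'I_n -> bool} -> 'M[Cplx]_(2 ^ m))
         (E : 'I_n -> bool -> 'M[Cplx]_(2 ^ m)),
    (forall x, density_mx (rho x)) /\
    (forall i, povm2 (E i)) /\
    (forall (x : {ffun 'I_n -> bool}) (i : 'I_n),
        ((p%:C)%C : Cplx) <= \tr (E i (x i) *m rho x)).

(* Main.v *)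
Require Import Defs.
From Stdlib Require Import Reals.
From HB Require Import structures.
From mathcomp Require Import all_boot all_order all_algebra.
From mathcomp Require Import complex Rstruct.
From mathcomp Require Import lra.
Import Order.TTheory GRing.Theory Num.Theory.
Local Open Scope ring_scope.

Theorem theorem2 (m : nat) (hm : (0 < m)%N) (p : Rdefinitions.R)
  (hp : 1 / 2 < p) : ~ QRA_coding (2 ^ (2 * m))%N m p.
Proof.
move=> [rho [E [Hd [HE Hp]]]].
set n := (2 ^ (2 * m))%N in rho E Hd HE Hp *.
set N := (2 ^ m)%N in rho E Hd HE Hp *.
set P : Cplx := ((p%:C)%C : Cplx) in Hp.
have hP2 : (1 : Cplx) < P + P.
  have : (((1%:C)%C : Cplx) < ((p + p)%:C)%C).
    by rewrite ltcR; lra.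
  by rewrite rmorphD.
have hP0 : (0 : Cplx) < P.
  have : (((0%:C)%C : Cplx) < ((p)%:C)%C).
    by rewrite ltcR; lra.
  done.
have Preal : P \is Num.real by apply: gtr0_real.
pose Mtop : 'M[Cplx]_(n, N * N) := \matrix_(i < n) mxvec (E i false).
pose M : 'M[Cplx]_(n + 1, N * N) := col_mx Mtop (mxvec (1%:M : 'M[Cplx]_N)).
have hnN : (N * N = n)%N by rewrite /n /N mul2n -addnn expnD.
have [c c0 cM] : exists2 c : 'rV[Cplx]_(n + 1), c != 0 & c *m M = 0.
  have K0 : kermx M != 0.
    rewrite -mxrank_eq0 mxrank_ker.
    have := rank_leq_col M; move: (\rank M) => r; rewrite hnN => h.
    by rewrite subn_eq0 -ltnNge addn1 ltnS.
  case: (pickP (fun i => row i (kermx M) != 0)) => [i Hi | H].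
    exists (row i (kermx M)) => //.
    by apply/sub_kermxP; apply: row_sub.
  exfalso; move/eqP: K0; apply; apply/row_matrixP => i.
  by rewrite row0; apply/eqP; move/negbFE: (H i).
set c1 := lsubmx c; set c2 := rsubmx c.
have Z : \sum_i c1 0 i *: E i false + c2 0 0 *: 1%:M = 0.
  apply: (can_inj mxvecK).
  transitivity (c *m M); last by rewrite cM linear0.
  rewrite linearD linear_sum /= -(hsubmxK c) mul_row_col.
  congr (_ + _).
    rewrite mulmx_sum_row; apply: eq_bigr => i _.
    by rewrite linearZ /= rowK.
  by rewrite [rsubmx c]mx11_scalar mul_scalar_mx linearZ.
have Tr : forall D : 'M[Cplx]_N,
    \sum_i c1 0 i * \tr (E i false *m D) + c2 0 0 * \tr D = 0.
  move=> D; have := congr1 (fun A => \tr (A *m D)) Z.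
  rewrite /= mulmxDl mulmx_suml mul0mx mxtrace0 mxtraceD raddf_sum.
  rewrite -scalemxAl mul1mx mxtraceZ => H; rewrite -[RHS]H; congr (_ + _).
  by apply: eq_bigr => i _; rewrite -scalemxAl; symmetry; apply: mxtraceZ.
have trrho x : \tr (rho x) = 1 by case: (Hd x).
have Etr i : E i true = 1%:M - E i false.
  case: (HE i) => _ [_ <-]; by rewrite addrAC subrr add0r.
pose g x i := \tr (E i false *m rho x).
have hlo (x : {ffun 'I_n -> bool}) (i : 'I_n) : x i = false -> P <= g x i.
  by move=> h; have := Hp x i; rewrite h.
have hhi (x : {ffun 'I_n -> bool}) (i : 'I_n) : x i = true -> g x i <= 1 - P.
  move=> h; have := Hp x i; rewrite h Etr mulmxBl mul1mx raddfB /= trrho.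
  by rewrite lerBrDl lerBrDr addrC.
have greal (x : {ffun 'I_n -> bool}) (i : 'I_n) : g x i \is Num.real.
  case h : (x i).
    by have H := hhi x i h; rewrite (ler_real H) rpredB // rpred1.
  by have H := hlo x i h; rewrite -(ler_real H).
have hPP : 1 - P < P by rewrite ltrBlDl.
case: (eqVneq c1 0) => [c10|c1n0].
  have c2n0 : c2 0 0 != 0.
    apply: contraNneq c0 => h.
    rewrite -(hsubmxK c) -/c1 -/c2 c10 [c2]mx11_scalar h.
    by rewrite raddf0 row_mx0.
  have := Tr (rho [ffun=> false]).
  rewrite big1 ?add0r; last by move=> i _; rewrite c10 mxE mul0r.
  by rewrite trrho mulr1 => /eqP; rewrite (negbTE c2n0).
have [j cj] : exists j, c1 0 j != 0.
  case: (pickP (fun j => c1 0 j != 0)) => [j h|H]; first by exists j.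
  exfalso; move/eqP: c1n0; apply; apply/rowP => j.
  by have := H j; rewrite /= => /negbFE/eqP ->; rewrite mxE.
set w := (c1 0 j)^*.
pose a i := 'Re (c1 0 i * w).
pose xp := [ffun i => ~~ (0 <= a i)].
pose xm := [ffun i => 0 <= a i].
pose D i := g xp i - g xm i.
have Dreal i : D i \is Num.real by rewrite rpredB.
have Dpos i : 0 <= a i -> 0 < D i.
  move=> h; rewrite subr_gt0.
  have e1 : xp i = false by rewrite ffunE h.
  have e2 : xm i = true by rewrite ffunE h.
  have h1 := hlo xp i e1; have h2 := hhi xm i e2.
  exact: le_lt_trans h2 (lt_le_trans hPP h1).
have Dneg i : ~~ (0 <= a i) -> D i < 0.
  move=> h; rewrite subr_lt0.
  have e1 : xp i = true by rewrite ffunE h.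
  have e2 : xm i = false by rewrite ffunE (negbTE h).
  have h1 := hhi xp i e1; have h2 := hlo xm i e2.
  exact: le_lt_trans h1 (lt_le_trans hPP h2).
have hterm i : 0 <= a i * D i.
  case h : (0 <= a i).
    by rewrite mulr_ge0 // ltW // Dpos.
  have ha : a i < 0 by rewrite real_ltNge ?Creal_Re ?real0 // h.
  by rewrite mulr_le0 // ltW // Dneg // h.
have ajpos : 0 < a j.
  rewrite /a /w -normCK.
  have /Creal_ReP -> : `|c1 0 j| ^+ 2 \is Num.real by rewrite rpredX // normr_real.
  by rewrite exprn_gt0 // normr_gt0.
have sum0 : \sum_i a i * D i = 0.
  have := Tr (rho xp - rho xm).
  rewrite raddfB /= !trrho subrr mulr0 addr0.
  rewrite (eq_bigr (fun i => c1 0 i * D i)); last first.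
    by move=> i _; rewrite mulmxBr raddfB.
  move=> H; have := congr1 (fun z => 'Re (z * w)) H.
  rewrite /= mul0r raddf0 mulr_suml raddf_sum => H2; rewrite -[RHS]H2.
  by apply: eq_bigr => i _; rewrite /= mulrAC (ReMr (Dreal i)).
have : 0 < \sum_i a i * D i.
  rewrite (bigD1 j) //=.
  apply: ltr_wpDr; first by apply: sumr_ge0 => i _; exact: hterm.
  by rewrite mulr_gt0 // Dpos // ltW.
by rewrite sum0 ltxx.
Qed.
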